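(* Let $q > 1$ be an integer. For all positive integers $n$ and $M$, $$\Pr\left(W \in C(n,q,M+1)\right) \geq \Pr\left(W' \in C(n,q,M)\right),$$ where $W$ is chosen uniformly at random from $\{x_0,\ldots,x_{q-1}\}^{M+1}$ and $W'$ is chosen uniformly at random from $\{x_0,\ldots,x_{q-1}\}^{M}$.
   Context: Fix the alphabet $\{x_0,\ldots,x_{q-1}\}$ of $q$ letters. A word $W$ is an instance of a word $V = y_0y_1\cdots y_{m-1}$ (each $y_i$ a letter) if $W = A_0A_1\cdots A_{m-1}$ with each $A_i$ a nonempty word and $A_i = A_j$ whenever $y_i = y_j$. The Zimin words are defined by $Z_0 := \varepsilon$ (the empty word) and $Z_{n+1} := Z_n z_n Z_n$ for distinct letters $z_0,z_1,\dots$. $C(n,q,M)$ denotes the set of words $W \in \{x_0,\ldots,x_{q-1}\}^M$ that are instances of $Z_n$. *)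

(* Defs.v *)
From mathcomp Require Import all_boot all_order all_algebra.
From mathcomp Require Import boolp.
Set Implicit Arguments. Unset Strict Implicit. Unset Printing Implicit Defensive.

(* Pattern words use letters in nat; Zimin letters z_i are represented by i. *)
Fixpoint zimin (n : nat) : seq nat :=
  match n with
  | 0 => [::]
  | n'.+1 => zimin n' ++ n' :: zimin n'
  end.

Definition is_instance (q : nat) (V : seq nat) (W : seq 'I_q) : Prop :=
  exists f : nat -> seq 'I_q,
    (forall y, y \in V -> f y != [::]) /\ W = flatten (map f V).

Definition C (n q M : nat) : {set M.-tuple 'I_q} :=
  [set W : M.-tuple 'I_q | `[< is_instance (zimin n) (val W) >]].

Definition probC (n q M : nat) : rat := (#|C n q M|)%:R / (q ^ M)%:R.

(* Main.v *)
Require Import Defs.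
From mathcomp Require Import all_boot all_order all_algebra.
From mathcomp Require Import boolp zify.
Import Order.TTheory GRing.Theory Num.Theory.
Local Open Scope ring_scope.

Lemma zimin_lt n y : y \in zimin n -> (y < n)%N.
Proof.
elim: n => [|n IH] //=; rewrite mem_cat in_cons => /or3P [/IH|/eqP->|/IH] //;
  move=> h; exact: ltnW.
Qed.

Lemma inst_ins q n (W : seq 'I_q) x :
  is_instance (zimin n.+1) W ->
  is_instance (zimin n.+1) (take ((size W)./2) W ++ x :: drop ((size W)./2) W).
Proof.
case=> f [Hne ->] /=.
set U := flatten (map f (zimin n)).
have An : f n != [::] by apply: Hne; rewrite /= mem_cat in_cons eqxx orbT.
rewrite map_cat flatten_cat /= -/U.
set m := (size _)./2.
have Hm : m = (size U + (size U + size (f n)))./2.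
  by rewrite /m !size_cat; congr (_./2); lia.
have Hk : (size U <= m)%N.
  rewrite Hm; move: (size U) (size (f n)) => a b.
  have: ((a.*2)./2 <= (a + (a + b))./2)%N by apply: half_leq; rewrite -addnn; lia.
  by rewrite doubleK.
have Hk2 : (m - size U <= size (f n))%N.
  rewrite Hm; move: (size U) (size (f n)) => a b.
  have: ((a + (a + b))./2 <= (a + b + (a + b))./2)%N by apply: half_leq; lia.
  rewrite addnn doubleK; lia.
exists (fun y => if y == n then take (m - size U) (f n) ++ x :: drop (m - size U) (f n) else f y).
split.
  by move=> y Hy; case: ifP => // _; [case: take | apply: Hne].
have Hmap : map (fun y => if y == n then take (m - size U) (f n) ++ x :: drop (m - size U) (f n) else f y) (zimin n) = map f (zimin n).
  apply/eq_in_map => y /zimin_lt; case: eqP => // ->; by rewrite ltnn.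
rewrite /= map_cat flatten_cat /= Hmap eqxx -/U.
rewrite take_cat drop_cat.
rewrite ltnNge Hk /= take_cat drop_cat.
case: ltnP => h.
  by rewrite -!catA.
have E : (m - size U = size (f n))%N by lia.
rewrite E subnn take0 drop0 cats0 take_size drop_size -!catA.
done.
Qed.

Definition insw q M (p : M.-tuple 'I_q * 'I_q) : M.+1.-tuple 'I_q :=
  insubd [tuple of p.2 :: p.1] (take M./2 p.1 ++ p.2 :: drop M./2 p.1).

Lemma half_le M : (M./2 <= M)%N.
Proof. rewrite leq_half_double -addnn; lia. Qed.

Lemma insw_val q M p :
  val (@insw q M p) = take M./2 p.1 ++ p.2 :: drop M./2 p.1.
Proof.
rewrite /insw val_insubd size_cat /= size_take size_drop size_tuple.
have := half_le M; case: ltnP => h1 h2; rewrite ifT //; apply/eqP; lia.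
Qed.

Lemma insw_inj q M : injective (@insw q M).
Proof.
move=> [a x] [b y] /(congr1 val); rewrite !insw_val /= => E.
have sa : size (take M./2 a) = M./2 by rewrite size_take size_tuple; have := half_le M; case: ltnP => //; lia.
have sb : size (take M./2 b) = M./2 by rewrite size_take size_tuple; have := half_le M; case: ltnP => //; lia.
have := congr1 (take M./2) E; rewrite !take_size_cat // => Et.
have := congr1 (drop M./2) E; rewrite !drop_size_cat // => [[Ex Ed]].
rewrite Ex; congr pair; apply: val_inj => /=.
by rewrite -(cat_take_drop M./2 a) -(cat_take_drop M./2 b) Et Ed.
Qed.

Theorem mainTheorem4 (q : nat) (hq : (1 < q)%N) (n M : nat)
  (hn : (0 < n)%N) (hM : (0 < M)%N) :
  probC n q M.+1 >= probC n q M.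
Proof.
have key : (#|C n q M| * q <= #|C n q M.+1|)%N.
  have -> : (#|C n q M| * q = #|setX (C n q M) [set: 'I_q]|)%N.
    by rewrite cardsX cardsT card_ord.
  rewrite -(card_imset _ (@insw_inj q M)).
  apply: subset_leq_card; apply/subsetP => _ /imsetP [[W x] /setXP [HW _] ->].
  move: HW; rewrite !inE => /asboolP HW; apply/asboolP.
  rewrite insw_val /=.
  case: n hn HW => // n' _ HW.
  by have := @inst_ins q n' (val W) x HW; rewrite size_tuple.
rewrite /probC expnS natrM.
have qp : (0 : rat) < q%:R by rewrite ltr0n; lia.
have qMp : (0 : rat) < (q ^ M)%:R by rewrite ltr0n expn_gt0; apply/orP; left; lia.
rewrite invfM mulrA ler_pM2r ?invr_gt0 // ler_pdivlMr // -natrM ler_nat.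
exact: key.
Qed.
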